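(* Let $S$ be a simple $(l,r)$-framed algebra and $C_S=\{\alpha\in\mathbb{Z}_2^{l+r}:S_{(0,\alpha)}\neq0\}$. Then $\dim S_{(0,\alpha)}=1$ for every $\alpha\in C_S$.
   Context: Let $\mathrm{IS}=\{0,\frac12,\frac1{16}\}$ with fusion rule $\star$ (values are subsets): $0\star h=h\star0=\{h\}$, $\frac12\star\frac12=\{0\}$, $\frac12\star\frac1{16}=\frac1{16}\star\frac12=\{\frac1{16}\}$, $\frac1{16}\star\frac1{16}=\{0,\frac12\}$; $A(h_0,h_1,h_2,h_3)=\{h: h\in h_2\star h_3,\ h_0\in h_1\star h\}$. For $h\in A(h_0,h_1,h_2,h_3)$, $h'\in A(h_0,h_2,h_1,h_3)$ define $B^{h,h'}_{h_0,h_1,h_2,h_3}$: $B_{*,0,*,*}=B_{*,*,0,*}=1$; $B_{*,\frac12,\frac12,*}=-1$; $B_{a,\frac12,\frac1{16},a'}=B_{a,\frac1{16},\frac12,a'}=i$ if $a$ or $a'$ is $\frac12$, else $-i$; $B^{b,b'}_{a,\frac1{16},\frac1{16},a'}=e^{-\pi i/8}\cdot\{1$ if $a,a'\ne\frac1{16},a=a'$; $i$ if $a,a'\neq\frac1{16},a\ne a'$; $\frac{1+i}2$ if $a=a'=\frac1{16},b=b'$; $\frac{1-i}2$ if $a=a'=\frac1{16},b\neq b'\}$. $\mathrm{IS}^{(l,r)}=\mathrm{IS}^l\times\mathrm{IS}^r$, $\lambda=(h_1,..,h_l,\bar h_1,..,\bar h_r)$, $s(\lambda)=\sum h_i-\sum\bar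 h_j$; $\star$, $A$ componentwise; $B^{\lambda,\lambda'}_{\lambda^0,\dots,\lambda^3}=\prod_{i\le l}B^{h_i,h'_i}_{h^0_i,\dots,h^3_i}\prod_{j\le r}\overline{B^{\bar h_j,\bar h'_j}_{\bar h^0_j,\dots,\bar h^3_j}}$. An $(l,r)$-framed algebra: finite-dimensional $\mathrm{IS}^{(l,r)}$-graded $S=\bigoplus S_\lambda$ over $\mathbb{C}$ with bilinear product, nonzero $1\in S_0$, $a\cdot_\lambda b$ the $S_\lambda$-component of $a\cdot b$, satisfying (FA1) $S_\lambda=0$ unless $s(\lambda)\in\mathbb{Z}$; (FA2) $S_0=\mathbb{C}1$, $1$ a two-sided unit; (FA3) $S_{\lambda^1}\cdot S_{\lambda^2}\subset\bigoplus_{\lambda\in\lambda^1\star\lambda^2}S_\lambda$; (FA4) $a_2\cdot_{\lambda^0}(a_1\cdot_{\lambda'}a_3)=\sum_{\lambda\in A(\lambda^0,\lambda^1,\lambda^2,\lambda^3)}B^{\lambda,\lambda'}_{\lambda^0,\lambda^1,\lambda^2,\lambda^3}a_1\cdot_{\lambda^0}(a_2\cdot_\lambda a_3)$ for $a_i\in S_{\lambda^i}$, $\lambda'\in A(\lambda^0,\lambda^2,\lambda^1,\lambda^3)$. Ideal: graded subspace $M$ with $S\cdot M\subset M$; simple: only ideals $0$ and $S$. Identify $\mathrm{IS}$ with $\{(d,c)\in\mathbb{Z}_2^2:dc=0\}$ via $0\leftrightarrow(0,0)$, $\frac12\leftrightarrow(0,1)$, $\frac1{16}\leftrightarrow(1,0)$,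 and componentwise $\mathrm{IS}^{(l,r)}$ with pairs $(d,c)\in(\mathbb{Z}_2^{l+r})^2$, $dc=0$. *)

(* Defs.v *)
From HB Require Import structures.
From mathcomp Require Import all_boot all_order all_algebra.
From mathcomp Require Import complex.
From mathcomp Require Import reals.

Set Implicit Arguments.
Unset Strict Implicit.
Unset Printing Implicit Defensive.

Import Order.TTheory GRing.Theory Num.Theory.
Local Open Scope ring_scope.

Inductive IS := h0 | hhalf | h16.

Definition IS_code (h : IS) : 'I_3 :=
  match h with h0 => inord 0 | hhalf => inord 1 | h16 => inord 2 end.
Definition IS_decode (i : 'I_3) : IS :=
  match val i with 0 => h0 | 1 => hhalf | _ => h16 end.
Lemma IS_codeK : cancel IS_code IS_decode.
Proof. by case; rewrite /IS_decode /= inordK. Qed.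

HB.instance Definition _ := Equality.copy IS (can_type IS_codeK).
HB.instance Definition _ := Choice.copy IS (can_type IS_codeK).
HB.instance Definition _ := Countable.copy IS (can_type IS_codeK).
HB.instance Definition _ := Finite.copy IS (can_type IS_codeK).

Definition wt (h : IS) : rat :=
  match h with h0 => 0 | hhalf => 1 / 2 | h16 => 1 / 16 end.

(* fus a b h  <=>  h \in a * b  (the fusion rule) *)
Definition fus (a b h : IS) : bool :=
  match a, b with
  | h0, _ => h == b
  | _, h0 => h == a
  | hhalf, hhalf => h == h0
  | hhalf, h16 | h16, hhalf => h == h16
  | h16, h16 => (h == h0) || (h == hhalf)
  end.

Definition inA1 (x0 x1 x2 x3 h : IS) : bool := fus x2 x3 h && fus x1 h x0.

Section Scalars.
Variable R : realType.

Definition Ci : R[i] := Complex 0 1.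

(* e^{-pi i/8} = cos(pi/8) - i sin(pi/8) *)
Definition zeta8 : R[i] :=
  Complex (Num.sqrt (2 + Num.sqrt 2) / 2) (- (Num.sqrt (2 - Num.sqrt 2) / 2)).

(* B^{b,b'}_{a,h1,h2,a'} for a single Ising factor *)
Definition B1 (b b' a x1 x2 a' : IS) : R[i] :=
  match x1, x2 with
  | h0, _ | _, h0 => 1
  | hhalf, hhalf => -1
  | hhalf, h16 | h16, hhalf =>
      if (a == hhalf) || (a' == hhalf) then Ci else - Ci
  | h16, h16 =>
      zeta8 *
      (if (a != h16) && (a' != h16) then
         (if a == a' then 1 else Ci)
       else if (a == h16) && (a' == h16) then
         (if b == b' then (1 + Ci) / 2 else (1 - Ci) / 2)
       else 0 (* this case never occurs for b, b' in the A-sets *))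
  end.
End Scalars.

Definition Lam (l r : nat) := ({ffun 'I_l -> IS} * {ffun 'I_r -> IS})%type.

Definition lam0 (l r : nat) : Lam l r := ([ffun => h0], [ffun => h0]).

Definition sLam (l r : nat) (x : Lam l r) : rat :=
  \sum_(i < l) wt (x.1 i) - \sum_(j < r) wt (x.2 j).

Definition fusL (l r : nat) (x1 x2 x : Lam l r) : bool :=
  [forall i, fus (x1.1 i) (x2.1 i) (x.1 i)] &&
  [forall j, fus (x1.2 j) (x2.2 j) (x.2 j)].

Definition inA (l r : nat) (x0 x1 x2 x3 x : Lam l r) : bool :=
  fusL x2 x3 x && fusL x1 x x0.

Definition BL (R : realType) (l r : nat) (x x' x0 x1 x2 x3 : Lam l r) : R[i] :=
  (\prod_(i < l) B1 R (x.1 i) (x'.1 i) (x0.1 i) (x1.1 i) (x2.1 i) (x3.1 i)) *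
  (\prod_(j < r) conjc (B1 R (x.2 j) (x'.2 j) (x0.2 j) (x1.2 j) (x2.2 j) (x3.2 j))).

(* The identification Z_2^(l+r) -> IS^(l,r), alpha |-> (d,c) = (0,alpha):
   entry i is 1/2 if alpha_i = 1 and 0 otherwise. *)
Definition lam_c (l r : nat) (alpha : {ffun 'I_(l + r) -> bool}) : Lam l r :=
  ([ffun i => if alpha (lshift r i) then hhalf else h0],
   [ffun j => if alpha (rshift l j) then hhalf else h0]).

(* A finite-dimensional graded space S = (+)_lam S_lam is encoded by a *)
(* finite-dimensional C-vector space S together with a complete family *)
(* of orthogonal projections proj lam (so S_lam = limg (proj lam) and  *)
(* the S_lam-component of x is proj lam x).                            *)
Section Framed.
Variables (R : realType) (l r : nat) (S : vectType R[i]).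
Variables (proj : Lam l r -> 'End(S)) (mul : S -> S -> S) (one : S).

Definition Sg (x : Lam l r) : {vspace S} := limg (proj x).

Definition mulc (x : Lam l r) (a b : S) : S := proj x (mul a b).

Definition is_grading : Prop :=
  (\sum_(x : Lam l r) proj x = \1)%VF /\
  (forall x y : Lam l r, (proj x \o proj y)%VF = if x == y then proj x else 0).

Definition is_bilinear : Prop :=
  (forall (k : R[i]) (a b c : S), mul (k *: a + b) c = k *: mul a c + mul b c) /\
  (forall (k : R[i]) (a b c : S), mul a (k *: b + c) = k *: mul a b + mul a c).

Definition FA1 : Prop :=
  forall x : Lam l r, sLam x \isn't a Num.int -> Sg x = 0%VS.

Definition FA2 : Prop :=
  one != 0 /\ Sg (lam0 l r) = <[one]>%VS /\
  (forall a : S, mul one a = a /\ mul a one = a).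

Definition FA3 : Prop :=
  forall (x1 x2 : Lam l r) (a b : S), a \in Sg x1 -> b \in Sg x2 ->
    mul a b \in (\sum_(x : Lam l r | fusL x1 x2 x) Sg x)%VS.

Definition FA4 : Prop :=
  forall (x0 x1 x2 x3 x' : Lam l r) (a1 a2 a3 : S),
    a1 \in Sg x1 -> a2 \in Sg x2 -> a3 \in Sg x3 ->
    inA x0 x2 x1 x3 x' ->
    mulc x0 a2 (mulc x' a1 a3) =
    \sum_(x : Lam l r | inA x0 x1 x2 x3 x)
        BL R x x' x0 x1 x2 x3 *: mulc x0 a1 (mulc x a2 a3).

Definition is_framed_algebra : Prop :=
  [/\ is_grading, is_bilinear, FA1, FA2 & (FA3 /\ FA4)].

Definition is_ideal (M : {vspace S}) : Prop :=
  (M = \sum_(x : Lam l r) (M :&: Sg x))%VS /\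
  (forall a m : S, m \in M -> mul a m \in M).

Definition is_simple : Prop :=
  forall M : {vspace S}, is_ideal M -> M = 0%VS \/ M = fullv.

End Framed.

(* Main.v *)
Require Import Defs.
From HB Require Import structures.
From mathcomp Require Import all_boot all_order all_algebra.
From mathcomp Require Import complex.
From mathcomp Require Import reals.

Set Implicit Arguments.
Unset Strict Implicit.
Unset Printing Implicit Defensive.
Import Order.TTheory GRing.Theory Num.Theory.
Local Open Scope ring_scope.

Lemma linfunE' (K : fieldType) (aT rT : vectType K) (f : aT -> rT) :
  (forall k u v, f (k *: u + v) = k *: f u + f v) -> linfun f =1 f.
Proof.
move=> Hf v.
pose g : {linear aT -> rT} := HB.pack f (GRing.isLinear.Build _ _ _ _ f Hf).
exact: (lfunE g v).
Qed.

Definition eqIS (a b : IS) := match a, b with h0,h0 | hhalf,hhalf | h16,h16 => true | _,_ => false end.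
Lemma IS_eqE (a b : IS) : (a == b) = eqIS a b.
Proof. apply/eqP/idP. by move=> <-; case: a. by case: a; case: b. Qed.
Lemma fus_sym (a b h : IS) : fus a b h = fus b a h.
Proof. by case: a; case: b. Qed.
Lemma fus_x0 (a : IS) : fus a h0 a.
Proof. by case: a; rewrite /= IS_eqE. Qed.
Lemma fus_eq0 (a b : IS) : fus a b h0 -> a = b.
Proof. by case: a; case: b; rewrite /= ?IS_eqE. Qed.

Section P.
Variables (l r : nat).
Implicit Types x y : Lam l r.

Lemma fusL_sym x y z : fusL x y z = fusL y x z.
Proof.
rewrite /fusL; congr andb; apply/eq_forallb => i; exact: fus_sym.
Qed.

Lemma fusL_x0 x : fusL x (lam0 l r) x.
Proof. by apply/andP; split; apply/forallP => i; rewrite ffunE fus_x0. Qed.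

Lemma fusL_eq0 x y : fusL x y (lam0 l r) -> x = y.
Proof.
case: x y => [x1 x2] [y1 y2] /andP[/forallP H1 /forallP H2] /=.
congr pair; apply/ffunP => i; apply: fus_eq0.
  by have := H1 i; rewrite /= ffunE.
by have := H2 i; rewrite /= ffunE.
Qed.

Lemma fusL_lamc (alpha : {ffun 'I_(l + r) -> bool}) x :
  fusL (lam_c alpha) (lam_c alpha) x = (x == lam0 l r).
Proof.
apply/idP/eqP => [/andP[/forallP H1 /forallP H2]|->].
  case: x H1 H2 => [x1 x2] /= H1 H2; congr pair; apply/ffunP => i; rewrite ffunE.
    by have := H1 i; rewrite /= ffunE; case: (alpha _) => /=; case: (x1 i); rewrite ?IS_eqE.
  by have := H2 i; rewrite /= ffunE; case: (alpha _) => /=; case: (x2 i); rewrite ?IS_eqE.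
apply/andP; split; apply/forallP => i /=; rewrite !ffunE; by case: (alpha _); rewrite /= ?IS_eqE.
Qed.
End P.

Section Main.
Variables (R : realType) (l r : nat) (S : vectType R[i]).
Variables (proj : Lam l r -> 'End(S)) (mul : S -> S -> S) (one : S).
Hypothesis HF : is_framed_algebra proj mul one.

Local Notation Sg := (Sg proj).
Local Notation P0 := (proj (lam0 l r)).
Implicit Types x y z w : Lam l r.

Lemma proj_suml x (I : Type) (s : seq I) (P : pred I) (F : I -> S) :
  proj x (\sum_(i <- s | P i) F i) = \sum_(i <- s | P i) proj x (F i).
Proof. exact: linear_sum. Qed.
Lemma projZ x k v : proj x (k *: v) = k *: proj x v.
Proof. exact: linearZ. Qed.
Lemma proj0 x : proj x 0 = 0.
Proof. exact: linear0. Qed.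

Lemma projD x u v : proj x (u + v) = proj x u + proj x v.
Proof. exact: linearD. Qed.

Lemma projK x y v : proj x (proj y v) = if x == y then proj x v else 0.
Proof.
case: HF => [[_ Hc] _ _ _ _].
have := congr1 (fun f : 'End(S) => f v) (Hc x y); rewrite /= comp_lfunE => ->.
by case: eqP => // _; rewrite zero_lfunE.
Qed.

Lemma proj_sum v : v = \sum_x proj x v.
Proof.
case: HF => [[Hs _] _ _ _ _].
by have := congr1 (fun f : 'End(S) => f v) Hs; rewrite /= sum_lfunE id_lfunE.
Qed.

Lemma proj_Sg x v : v \in Sg x -> proj x v = v.
Proof. by case/memv_imgP => u _ ->; rewrite projK eqxx. Qed.

Lemma proj_in x v : proj x v \in Sg x.
Proof. exact/memv_img/memvf. Qed.

Lemma mulDl a b c : mul (a + b) c = mul a c + mul b c.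
Proof. case: HF => [_ [Hl _] _ _ _]; by rewrite -[a]scale1r Hl !scale1r. Qed.
Lemma mulDr a b c : mul c (a + b) = mul c a + mul c b.
Proof. case: HF => [_ [_ Hr] _ _ _]; by rewrite -[a]scale1r Hr !scale1r. Qed.
Lemma mul0l c : mul 0 c = 0.
Proof. apply/(@addrI _ (mul 0 c)) => /=; by rewrite -mulDl !addr0. Qed.
Lemma mul0r c : mul c 0 = 0.
Proof. apply/(@addrI _ (mul c 0)) => /=; by rewrite -mulDr !addr0. Qed.
Lemma mulZl k a c : mul (k *: a) c = k *: mul a c.
Proof. case: HF => [_ [Hl _] _ _ _]; by rewrite -[k *: a]addr0 Hl mul0l addr0. Qed.
Lemma mulZr k a c : mul c (k *: a) = k *: mul c a.
Proof. case: HF => [_ [_ Hr] _ _ _]; by rewrite -[k *: a]addr0 Hr mul0r addr0. Qed.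
Lemma mul_suml (I : Type) (s : seq I) (P : pred I) (F : I -> S) c :
  mul (\sum_(i <- s | P i) F i) c = \sum_(i <- s | P i) mul (F i) c.
Proof. elim/big_rec2: _ => [|i y1 y2 _ <-]; [exact: mul0l | exact: mulDl]. Qed.
Lemma mul_sumr (I : Type) (s : seq I) (P : pred I) (F : I -> S) c :
  mul c (\sum_(i <- s | P i) F i) = \sum_(i <- s | P i) mul c (F i).
Proof. elim/big_rec2: _ => [|i y1 y2 _ <-]; [exact: mul0r | exact: mulDr]. Qed.

Lemma F3 x1 x2 x a b : a \in Sg x1 -> b \in Sg x2 -> ~~ fusL x1 x2 x ->
  proj x (mul a b) = 0.
Proof.
case: HF => [_ _ _ _ [H3 _]] Ha Hb Hn.
have /memv_sumP[vs Hvs ->] := H3 _ _ _ _ Ha Hb.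
rewrite proj_suml big1 // => y Hy.
rewrite -(proj_Sg (Hvs y Hy)) projK; case: eqP => // Exy.
by rewrite Exy Hy in Hn.
Qed.

Lemma one_in : one \in Sg (lam0 l r).
Proof. case: HF => [_ _ _ [_ [-> _]] _]; exact: memv_line. Qed.

Lemma skew x1 x2 x0 a b : a \in Sg x1 -> b \in Sg x2 ->
  exists beta : R[i], proj x0 (mul b a) = beta *: proj x0 (mul a b).
Proof.
move=> Ha Hb.
case Hf: (fusL x1 x2 x0); last first.
  exists 0; rewrite scale0r (F3 Hb Ha) //; by rewrite fusL_sym Hf.
case: HF => [_ _ _ [_ [_ H1]] [_ H4]].
have Hi : inA x0 x2 x1 (lam0 l r) x1 by rewrite /inA fusL_x0 fusL_sym Hf.
have := H4 x0 x1 x2 (lam0 l r) x1 a b one Ha Hb one_in Hi.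
rewrite /Defs.mulc (H1 a).2 (proj_Sg Ha) => ->.
rewrite (bigD1 x2) /=; last by rewrite /inA fusL_x0 Hf.
rewrite big1 ?addr0; first by rewrite (H1 b).2 (proj_Sg Hb); eexists.
move=> x /andP[_ nx]; rewrite (H1 b).2 -(proj_Sg Hb) projK (negbTE nx).
by rewrite mul0r proj0 scaler0.
Qed.


Definition form (m : S) : 'End(S) := linfun (fun c => P0 (mul c m)).
Lemma formE m c : form m c = P0 (mul c m).
Proof. by apply: linfunE' => k u v; rewrite mulDl mulZl projD projZ. Qed.

Lemma linform m : linfun form m = form m.
Proof.
apply: linfunE' => k u v; apply/lfunP => c.
by rewrite add_lfunE scale_lfunE !formE mulDr mulZr projD projZ.
Qed.

Definition Iv : {vspace S} := lker (linfun form).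

Lemma memI m : reflect (forall c, P0 (mul c m) = 0) (m \in Iv).
Proof.
rewrite memv_ker linform; apply: (iffP eqP) => [H c | H].
  by rewrite -formE H zero_lfunE.
by apply/lfunP => c; rewrite formE H zero_lfunE.
Qed.

Lemma I_aux m y w c : m \in Iv -> c \in Sg y -> P0 (mul c (proj w m)) = 0.
Proof.
move=> /memI Hm Hc.
case: (eqVneq w y) => [->|nwy].
  have := Hm c; rewrite {1}(proj_sum m) mul_sumr proj_suml (bigD1 y) //= big1 ?addr0 // => w' nw'.
  apply: (F3 Hc (proj_in _ _)); apply/negP => /fusL_eq0 E.
  by rewrite E eqxx in nw'.
apply: (F3 Hc (proj_in _ _)); apply/negP => /fusL_eq0 E.
by rewrite E eqxx in nwy.
Qed.

Lemma I_proj m w : m \in Iv -> proj w m \in Iv.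
Proof.
move=> Hm; apply/memI => c; rewrite (proj_sum c) mul_suml proj_suml big1 // => y _.
exact: (I_aux _ Hm (proj_in _ _)).
Qed.

Lemma I_hom m t c w z y x' : m \in Iv -> m \in Sg w -> t \in Sg z -> c \in Sg y ->
  P0 (mul c (proj x' (mul t m))) = 0.
Proof.
move=> HI Hm Ht Hc.
case: HF => [_ _ _ _ [_ H4]].
case Hi: (inA (lam0 l r) y z w x'); last first.
  move: Hi; rewrite /inA; case Hf1: (fusL z w x') => /= Hf2.
    by apply: (F3 Hc (proj_in _ _)); rewrite Hf2.
  by rewrite (F3 Ht Hm) ?Hf1 // mul0r proj0.
have := H4 (lam0 l r) z y w x' t c m Ht Hc Hm Hi; rewrite /Defs.mulc => ->.
rewrite big1 // => x Hx.
have [beta ->] := @skew w y x m c Hm Hc.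
rewrite mulZr projZ.
have Hi2 : inA (lam0 l r) z w y x by move: Hx; rewrite /inA fusL_sym.
have := H4 (lam0 l r) w z y x m t c Hm Ht Hc Hi2; rewrite /Defs.mulc => ->.
rewrite big1 ?scaler0 // => x'' _.
have [beta' ->] := @skew x'' w (lam0 l r) (proj x'' (mul t c)) m (proj_in _ _) Hm.
by move/memI: HI => ->; rewrite !scaler0.
Qed.

Lemma I_ideal m t : m \in Iv -> mul t m \in Iv.
Proof.
move=> HI; apply/memI => c.
rewrite (proj_sum c) mul_suml proj_suml big1 // => y _.
rewrite (proj_sum t) mul_suml mul_sumr proj_suml big1 // => z _.
rewrite (proj_sum m) mul_sumr mul_sumr proj_suml big1 // => w _.
rewrite (proj_sum (mul (proj z t) (proj w m))) mul_sumr proj_suml big1 // => x' _.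
apply: (@I_hom (proj w m) (proj z t) (proj y c) w z y x').
- exact: I_proj.
- exact: proj_in.
- exact: proj_in.
- exact: proj_in.
Qed.

Lemma I_is_ideal : is_ideal proj mul Iv.
Proof.
split; last by move=> a m; exact: I_ideal.
apply/eqP; rewrite eqEsubv; apply/andP; split.
  apply/subvP => m Hm; rewrite (proj_sum m); apply: memv_sumr => x _.
  by rewrite memv_cap I_proj // proj_in.
by apply/subv_sumP => x _; exact: capvSl.
Qed.

Lemma I0 : is_simple proj mul -> Iv = 0%VS.
Proof.
move=> Hs; case: (Hs _ I_is_ideal) => // HIf.
have : one \in Iv by rewrite HIf memvf.
case: HF => [_ _ _ [Hn [_ H1]] _] /memI /(_ one).
rewrite (H1 one).1 (proj_Sg one_in) => E; by rewrite E eqxx in Hn.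
Qed.

Lemma main_lemma (alpha : {ffun 'I_(l + r) -> bool}) : is_simple proj mul ->
  Sg (lam_c alpha) != 0%VS -> \dim (Sg (lam_c alpha)) = 1%N.
Proof.
move=> Hs Hnz; set L := lam_c alpha.
case: HF => [_ _ _ [_ [HS0 H1]] [_ H4]].
pose a := vpick (Sg L).
have Ha : a \in Sg L := memv_pick _.
have Hna : a != 0 by rewrite vpick0.
have : a \notin Iv by rewrite I0 // memv0.
rewrite memv_ker linform => /lfunPn [c]; rewrite formE zero_lfunE => Hc.
set c' := proj L c.
have Hc' : P0 (mul c' a) != 0.
  suff <- : P0 (mul c a) = P0 (mul c' a) by [].
  rewrite {1}(proj_sum c) mul_suml proj_suml (bigD1 L) //= big1 ?addr0 // => y ny.
  apply: (F3 (proj_in _ _) Ha); apply/negP => /fusL_eq0 E.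
  by rewrite E eqxx in ny.
have [beta Eb] := @skew L L (lam0 l r) a c' Ha (proj_in _ _).
have Hac : P0 (mul a c') != 0.
  by apply: contra Hc' => /eqP E; rewrite Eb E scaler0.
have [k Ek] : exists k, P0 (mul a c') = k *: one.
  by apply/vlineP; rewrite -HS0; exact: proj_in.
have Hk : k != 0.
  by apply: contra Hac => /eqP k0; rewrite Ek k0 scale0r.
have Hsub : (Sg L <= <[a]>)%VS.
  apply/subvP => b Hb.
  have [k' Ek'] : exists k', P0 (mul b c') = k' *: one.
    by apply/vlineP; rewrite -HS0; exact: proj_in.
  have Hi : inA L L L L (lam0 l r) by rewrite /inA fusL_lamc eqxx fusL_x0.
  have := H4 L L L L (lam0 l r) a b c' Ha Hb (proj_in _ _) Hi; rewrite /Defs.mulc Ek.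
  rewrite (bigD1 (lam0 l r)) //= big1 ?addr0; last first.
    move=> x /andP[/andP[H _] nx]; rewrite fusL_lamc in H.
    by rewrite (eqP H) eqxx in nx.
  rewrite Ek' !mulZr !projZ (H1 b).2 (H1 a).2 (proj_Sg Hb) (proj_Sg Ha) => E.
  apply/vlineP; exists (k^-1 * (BL R (lam0 l r) (lam0 l r) L L L L * k')).
  by rewrite -scalerA -(scalerA (BL _ _ _ _ _ _ _)) -E scalerA mulVf // scale1r.
have := dimvS Hsub; rewrite dim_vline Hna => le1.
by apply/eqP; rewrite eqn_leq le1 lt0n dimv_eq0 Hnz.
Qed.

End Main.

Theorem mainTheorem7 (R : realType) (l r : nat) (S : vectType R[i])
    (proj : Lam l r -> 'End(S)) (mul : S -> S -> S) (one : S) :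
  is_framed_algebra proj mul one ->
  is_simple proj mul ->
  forall alpha : {ffun 'I_(l + r) -> bool},
    Sg proj (lam_c alpha) != 0%VS ->
    \dim (Sg proj (lam_c alpha)) = 1%N.
Proof.
move=> HF Hs alpha Hnz; exact: (main_lemma HF Hs Hnz).
Qed.
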